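(* Let $\lambda\ge\omega_3$ be a cardinal, $F:[\lambda]^2\to\omega_1$ any function, and $\mathcal P=\langle P,\le\rangle$ the forcing poset defined in the context. Then: (a) If $p=\langle X,\preceq,i\rangle\in P$ and $t\in T\setminus X$, then there is $p'=\langle X',\preceq',i'\rangle\in P$ with $p'\le p$ and $t\in X'$. (b) If $p=\langle X,\preceq,i\rangle\in P$, $t\in X$, $\alpha<\min\{\pi(t),\omega_1\}$ and $n<\omega$, then there are $p'=\langle X',\preceq',i'\rangle\in P$ with $p'\le p$ and $s\in X'\setminus X$ with $\pi(s)=\alpha$ and $\rho(s)>n$ such that for every $x\in X$: $s\preceq' x$ iff $t\preceq x$.
   Context: For $s=\langle\alpha,\zeta\rangle$ write $\pi(s)=\alpha$, $\rho(s)=\zeta$. Let $T=(\omega_1\times\omega)\cup(\{\omega_1,\omega_1+1\}\times\lambda)$, with $T_\alpha=\{\alpha\}\times\omega$ for $\alpha<\omega_1$, $T_{\omega_1}=\{\omega_1\}\times\lambda$, $T_{\omega_1+1}=\{\omega_1+1\}\times\lambda$, and $t_\xi=\langle\omega_1+1,\xi\rangle$ for $\xi<\lambda$. Let $\mathbb B=\{S\}\cup\lambda$ (where $S$ is a new symbol), $\mathbb B_S=\omega_1\times\omega$ and $\mathbb B_\zeta=\{\omega_1\}\times[\omega\cdot\zeta,\omega\cdot\zeta+\omega)\cup\{t_\zeta\}$ for $\zeta<\lambda$; these partition $T$, and $\pi_B:T\to\mathbb B$ is defined by $x\in\mathbb B_{\pi_B(x)}$. $P$ consists of all triples $p=\langle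 X,\preceq,i\rangle$ such that: (P1) $X\in[T]^{<\omega}$; (P2) $\preceq$ is a partial order on $X$ such that $x\prec y$ implies $\pi(x)<\pi(y)$; (P3) if $X\cap\mathbb B_\zeta\ne\emptyset$ for some $\zeta<\lambda$, then $t_\zeta\in X$; (P4) if $x\in X\cap T_{\omega_1}\cap\mathbb B_\zeta$ for $\zeta<\lambda$, then $x\prec t_\zeta$ and $x\not\prec t_\xi$ for all $\xi\ne\zeta$ (with $t_\xi\in X$); (P5) if $s\neq t$ lie in the same $\mathbb B_b$ ($b\in\mathbb B$) with $\pi(s)=\pi(t)$, then $i\{s,t\}=\emptyset$; (P6) if $t\in X\cap T_{\alpha+1}$ for some $\alpha\le\omega_1$ and $s\prec t$, then there is $v\in X\cap T_\alpha$ with $s\preceq v\prec t$; (P7) $i:[X]^2\to[X]^{<\omega}$ satisfies $i\{x,y\}=\{x\}$ whenever $x\prec y$, and whenever $x,y\in X$ are $\preceq$-incomparable: (a) for all $u\in X$, ($u\preceq x$ and $u\preceq y$) iff $u\preceq v$ for some $v\in i\{x,y\}$; (b) if $x,y\in T_{\omega_1}\cup T_{\omega_1+1}$ and $\pi_B(x)\ne\pi_B(y)$, then $\pi[i\{x,y\}]\subseteq F\{\pi_B(x),\pi_B(y)\}$ (the ordinal $F\{\cdot,\cdot\}<\omega_1$ viewed as the set of smaller ordinals). Order: $\langle X',\preceq',i'\rangle\le\langle X,\preceq,i\rangle$ iff $X\subseteq X'$, $\preceq=\preceq'\cap(X\times X)$, and $i\subseteq i'$. *)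

(* Defs.v *)
(* Ordinals omega_1 and the cardinal lambda are modelled by types. *)
From Stdlib Require Import List.

Definition injective {A B : Type} (f : A -> B) : Prop :=
  forall x y, f x = f y -> x = y.

Definition strict_well_order {A : Type} (R : A -> A -> Prop) : Prop :=
  (forall x, ~ R x x) /\
  (forall x y z, R x y -> R y z -> R x z) /\
  (forall x y, R x y \/ x = y \/ R y x) /\
  well_founded R.

(* card_le_aleph n A  <->  |A| <= aleph_n  (under AC):
   |A| <= aleph_0 iff A injects into nat;
   |A| <= aleph_(n+1) iff A has a well-order all of whose proper
   initial segments have size <= aleph_n. *)
Fixpoint card_le_aleph (n : nat) (A : Type) : Prop :=
  match n with
  | 0 => exists f : A -> nat, injective f
  | S m => exists R : A -> A -> Prop,
             strict_well_order R /\ forall a, card_le_aleph m {b : A | R b a}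
  end.

Definition is_omega1 {O : Type} (lt : O -> O -> Prop) : Prop :=
  strict_well_order lt /\ ~ card_le_aleph 0 O /\
  (forall a, card_le_aleph 0 {b : O | lt b a}).

Section Forcing.
Variables (O : Type) (ltO : O -> O -> Prop) (L : Type).

(* Points of T:
   TLow a n  = <a, n>              (a < omega_1, n < omega)
   TMid z n  = <omega_1, omega*z+n> (z < lambda, n < omega)
   TTop z    = t_z = <omega_1+1, z> (z < lambda) *)
Inductive T : Type :=
| TLow (a : O) (n : nat)
| TMid (z : L) (n : nat)
| TTop (z : L).

(* levels: ordinals <= omega_1 + 1 *)
Inductive Lev : Type := LO (a : O) | LW1 | LW1p.

Definition pi (x : T) : Lev :=
  match x with TLow a _ => LO a | TMid _ _ => LW1 | TTop _ => LW1p end.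

Definition lev_lt (u v : Lev) : Prop :=
  match u, v with
  | LO a, LO b => ltO a b
  | LO _, LW1 => True
  | LO _, LW1p => True
  | LW1, LW1p => True
  | _, _ => False
  end.

Definition lev_succ (u v : Lev) : Prop :=
  match u, v with
  | LO a, LO b => ltO a b /\ forall c, ~ (ltO a c /\ ltO c b)
  | LW1, LW1p => True
  | _, _ => False
  end.

Inductive Bidx : Type := BS | Bz (z : L).

Definition piB (x : T) : Bidx :=
  match x with TLow _ _ => BS | TMid z _ => Bz z | TTop z => Bz z end.

Definition is_high (x : T) : Prop := pi x = LW1 \/ pi x = LW1p.

Definition finite_set (S : T -> Prop) : Prop :=
  exists l : list T, forall x, S x <-> In x l.

(* a triple <X, <=, i>; sets are predicates, i maps a pair to a set *)
Record cond : Type := mkCond {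
  cX : T -> Prop;
  cle : T -> T -> Prop;
  ci : T -> T -> T -> Prop }.

Definition cprec (p : cond) (x y : T) : Prop := cle p x y /\ x <> y.

Definition InP (F : L -> L -> O) (p : cond) : Prop :=
  finite_set (cX p) /\
  (forall x y, cle p x y -> cX p x /\ cX p y) /\
  (forall x, cX p x -> cle p x x) /\
  (forall x y, cle p x y -> cle p y x -> x = y) /\
  (forall x y z, cle p x y -> cle p y z -> cle p x z) /\
  (forall x y, cprec p x y -> lev_lt (pi x) (pi y)) /\
  (forall x z, cX p x -> piB x = Bz z -> cX p (TTop z)) /\
  (forall z n, cX p (TMid z n) ->
     cprec p (TMid z n) (TTop z) /\
     (forall xi, xi <> z -> cX p (TTop xi) -> ~ cprec p (TMid z n) (TTop xi))) /\
  (forall s t, cX p s -> cX p t -> s <> t -> piB s = piB t -> pi s = pi t ->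
     forall v, ~ ci p s t v) /\
  (forall s t u, cX p t -> lev_succ u (pi t) -> cprec p s t ->
     exists v, cX p v /\ pi v = u /\ cle p s v /\ cprec p v t) /\
  (* P7: i : [X]^2 -> [X]^{<omega} (symmetric in the unordered pair) *)
  (forall x y, cX p x -> cX p y -> x <> y ->
     finite_set (ci p x y) /\ (forall v, ci p x y v -> cX p v) /\
     (forall v, ci p x y v <-> ci p y x v)) /\
  (forall x y, cprec p x y -> forall v, ci p x y v <-> v = x) /\
  (forall x y, cX p x -> cX p y -> ~ cle p x y -> ~ cle p y x ->
     (forall u, cX p u ->
        (cle p u x /\ cle p u y <-> exists v, ci p x y v /\ cle p u v)) /\
     (forall z z', is_high x -> is_high y -> piB x = Bz z -> piB y = Bz z' ->
        z <> z' -> forall v, ci p x y v -> lev_lt (pi v) (LO (F z z')))).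

Definition ext (p' p : cond) : Prop :=
  (forall x, cX p x -> cX p' x) /\
  (forall x y, cX p x -> cX p y -> (cle p x y <-> cle p' x y)) /\
  (forall x y, cX p x -> cX p y -> x <> y ->
     forall v, ci p x y v <-> ci p' x y v).

End Forcing.

Arguments TLow {O L}. Arguments TMid {O L}. Arguments TTop {O L}.
Arguments LO {O}. Arguments LW1 {O}. Arguments LW1p {O}.
Arguments InP {O} ltO {L} F p.
Arguments lev_lt {O} ltO u v.
Arguments pi {O L} x.
Arguments cX {O L} c _.
Arguments cle {O L} c _ _.
Arguments ext {O L} p' p.

(* Main.v *)
Require Import Defs.
From Stdlib Require Import List Classical Lia Wellfounded.

Section S.
Variables (O : Type) (ltO : O -> O -> Prop) (L : Type) (F : L -> L -> O).
Hypothesis irr : forall x, ~ ltO x x.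
Hypothesis trO : forall x y z, ltO x y -> ltO y z -> ltO x z.
Hypothesis triO : forall x y, ltO x y \/ x = y \/ ltO y x.
Hypothesis wfO : well_founded ltO.

Lemma lev_irr : forall u : Lev O, ~ lev_lt ltO u u.
Proof. destruct u; simpl; auto. Qed.
Lemma lev_trans : forall u v w : Lev O, lev_lt ltO u v -> lev_lt ltO v w -> lev_lt ltO u w.
Proof. destruct u, v, w; simpl; intros; try tauto; eauto. Qed.

Lemma succ_lt (u w : Lev O) : lev_succ O ltO u w -> lev_lt ltO u w.
Proof. destruct u, w; simpl; tauto. Qed.

Lemma succ_below (u v w : Lev O) : lev_succ O ltO u w -> lev_lt ltO v w -> v = u \/ lev_lt ltO v u.
Proof.
  destruct u as [b| |], w as [c| |]; simpl; try tauto.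
  - intros [Hbc H] Hv. destruct v as [a| |]; simpl in Hv; try tauto.
    destruct (triO a b) as [Hab|[Hab|Hab]].
    + right; simpl; auto.
    + left; subst; auto.
    + exfalso; apply (H a); auto.
  - intros _ Hv. destruct v as [a| |]; simpl in Hv; try tauto; auto.
Qed.

Lemma succ_uniq (u1 u2 w : Lev O) : lev_succ O ltO u1 w -> lev_succ O ltO u2 w -> u1 = u2.
Proof.
  destruct u1 as [b1| |], u2 as [b2| |], w as [c| |]; simpl; try tauto.
  intros [H1 H1'] [H2 H2'].
  destruct (triO b1 b2) as [H|[H|H]].
  - exfalso; apply (H1' b2); auto.
  - subst; auto.
  - exfalso; apply (H2' b1); auto.
Qed.

Lemma lev_wf : well_founded (lev_lt ltO).
Proof.
  assert (HLO : forall a, Acc (lev_lt ltO) (LO a)).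
  { intro a; induction (wfO a) as [a _ IH]. constructor; intros [b| |] H; simpl in H; try tauto. apply IH; auto. }
  assert (HW : Acc (lev_lt ltO) LW1). { constructor; intros [b| |] H; simpl in H; try tauto; apply HLO. }
  intros [a| |]; auto. constructor; intros [b| |] H; simpl in H; try tauto; auto.
Qed.

Definition addc (p : cond O L) (s : T O L) (U : T O L -> Prop) : cond O L :=
  mkCond O L (fun x => x = s \/ cX p x)
    (fun x y => cle p x y \/ (x = s /\ (y = s \/ U y)))
    (fun x y v => (x <> s /\ y <> s /\ ci O L p x y v) \/
                  (x = s /\ y <> s /\ U y /\ v = s) \/
                  (y = s /\ x <> s /\ U x /\ v = s)).

Lemma ext_trans (p3 p2 p1 : cond O L) : ext p3 p2 -> ext p2 p1 -> ext p3 p1.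
Proof.
  intros [A1 [B1 C1]] [A2 [B2 C2]]; split; [|split].
  - auto.
  - intros x y Hx Hy. rewrite B2 by auto. apply B1; auto.
  - intros x y Hx Hy Hne v. rewrite C2 by auto. apply C1; auto.
Qed.


Lemma add_point (p : cond O L) (s : T O L) (U : T O L -> Prop) :
  InP ltO F p -> ~ cX p s ->
  (forall x, U x -> cX p x) ->
  (forall x y, U x -> cle p x y -> U y) ->
  (forall x, U x -> lev_lt ltO (pi s) (pi x)) ->
  (forall z, piB O L s = Bz L z -> s = TTop z \/ cX p (TTop z)) ->
  (forall z n, s = TMid z n -> U (TTop z) /\ forall xi, xi <> z -> ~ U (TTop xi)) ->
  (forall x u, U x -> lev_succ O ltO u (pi x) -> u = pi s \/ exists v, U v /\ pi v = u /\ cprec O L p v x) ->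
  (forall x y, U x -> U y -> ~ cle p x y -> ~ cle p y x -> exists v, ci O L p x y v /\ U v) ->
  InP ltO F (addc p s U) /\ ext (addc p s U) p.
Proof.
  intros Hp Hs HUX HUup HUlev H3 H4 H6 H7.
  destruct Hp as (P1 & P2a & P2r & P2as & P2t & P2l & P3 & P4 & P5 & P6 & P7f & P7c & P7i).
  assert (NL : forall y, ~ cle p s y) by (intros y H; apply P2a in H; tauto).
  assert (NR : forall y, ~ cle p y s) by (intros y H; apply P2a in H; tauto).
  assert (Ss : s = s) by reflexivity.
  split.
  2:{ split; [|split].
    - intros x Hx; simpl; auto.
    - intros x y Hx Hy; simpl; split; [auto| intros [H|[-> _]]; [auto|contradiction]].
    - intros x y Hx Hy Hne v; simpl.
      assert (x <> s) by (intro; subst; contradiction).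
      assert (y <> s) by (intro; subst; contradiction). tauto. }
  unfold InP, cprec in *; simpl.
  split; [|split; [|split; [|split; [|split; [|split; [|split; [|split; [|split; [|split; [|split; [|split]]]]]]]]]]].
  -
    destruct P1 as [l Hl]; exists (s :: l); intros x; simpl; rewrite <- Hl; split; intros [H|H]; auto.
  - intros x y [H|[-> [->|HU]]]; [apply P2a in H; tauto | tauto | split; [left; auto| right; apply HUX; auto]].
  - intros x [->|H]; [right; split; auto | left; apply P2r; auto].
  - intros x y [H1|[-> H1]] [H2|[-> H2]]; auto.
    + exfalso; eapply NR; eauto.
    + exfalso; eapply NR; eauto.
  - intros x y z [H1|[-> H1]] [H2|[-> H2]].
    + left; eauto.
    + exfalso; eapply NR; eauto.
    + destruct H1 as [->|HUy]; [exfalso; eapply NL; eauto|].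
      right; split; auto; right; eapply HUup; eauto.
    + right; auto.
  - intros x y [[H|[-> H]] Hne].
    + apply P2l; auto.
    + destruct H as [->|HU]; [contradiction|apply HUlev; auto].
  - intros x z [->|Hx] Hb.
    + destruct (H3 z Hb) as [->|H]; auto.
    + right; eapply P3; eauto.
  - intros z n [Hs'|Hx].
    + destruct (H4 z n (eq_sym Hs')) as [HU1 HU2]. split.
      * split; [right; split; auto| discriminate].
      * intros xi Hxi _ [H _]. destruct H as [H|[_ [H|H]]].
        -- rewrite Hs' in H; eapply NL; eauto.
        -- rewrite <- Hs' in H; discriminate.
        -- eapply HU2; eauto.
    + destruct (P4 z n Hx) as [[Hc Hne] Hr]. split.
      * split; [left; auto | auto].
      * intros xi Hxi Hxi' [H Hne2]. destruct H as [H|[H _]].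
        -- destruct Hxi' as [E|Hxi'].
           ++ rewrite E in H; eapply NR; eauto.
           ++ apply (Hr xi Hxi Hxi'); split; auto.
        -- rewrite H in Hx; contradiction.
  - intros x y Hx Hy Hne Hb Hpi v [[Hxs [Hys Hc]]|[[-> [_ [HU _]]]|[-> [_ [HU _]]]]].
    + destruct Hx as [|Hx]; [contradiction|]. destruct Hy as [|Hy]; [contradiction|].
      eapply P5; [exact Hx|exact Hy|eauto..].
    + apply (lev_irr (pi s)); rewrite Hpi at 2; auto.
    + apply (lev_irr (pi s)); rewrite <- Hpi at 2; auto.
  - intros x t u Ht Hsucc [Hc Hne].
    destruct Hc as [Hc|[-> [->|HUt]]].
    + destruct (P2a _ _ Hc) as [Hxx Htt].
      destruct (P6 x t u Htt Hsucc (conj Hc Hne)) as [v [Hv [Hpv [Hxv [Hvt Hvt']]]]].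
      exists v; split; [right; auto|split; [auto|split; [left; auto|split; [left; auto|auto]]]].
    + contradiction.
    + destruct (H6 t u HUt Hsucc) as [Hu | [v [HUv [Hpv [Hcp Hne']]]]].
      * exists s; split; [left; reflexivity | split; [auto | split; [right; split; [reflexivity| left; reflexivity] | split; [right; split; [reflexivity | right; auto] | auto]]]].
      * exists v; split; [right; auto|split; [auto|split; [right; split; auto|split; [left; auto|auto]]]].
  - intros x y Hx Hy Hne.
    assert (Hsym : forall v, x <> s -> y <> s -> (ci O L p x y v <-> ci O L p y x v)).
    { intros v Hxs Hys. destruct Hx as [|Hx]; [contradiction|]. destruct Hy as [|Hy]; [contradiction|].
      apply (P7f x y Hx Hy Hne). }
    split; [|split].
    + destruct (classic (x = s)) as [Ex|Nx]; destruct (classic (y = s)) as [Ey|Ny].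
      * subst; contradiction.
      * subst x. destruct (classic (U y)) as [Uy|Ny'].
        -- exists (s :: nil). intros v; simpl; split.
           ++ intros [[H _]|[[_ [_ [_ ->]]]|[H _]]]; [contradiction|left;auto|contradiction].
           ++ intros [<-|[]]; right; left; repeat split; auto.
        -- exists nil. intros v; simpl; split; [|tauto].
           intros [[H _]|[[_ [_ [H _]]]|[H _]]]; contradiction.
      * subst y. destruct (classic (U x)) as [Ux|Nx'].
        -- exists (s :: nil). intros v; simpl; split.
           ++ intros [[_ [H _]]|[[H _]|[_ [_ [_ ->]]]]]; [contradiction|contradiction|left;auto].
           ++ intros [<-|[]]; right; right; repeat split; auto.
        -- exists nil. intros v; simpl; split; [|tauto].
           intros [[_ [H _]]|[[H _]|[_ [_ [H _]]]]]; contradiction.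
      * destruct Hx as [|Hx]; [contradiction|]. destruct Hy as [|Hy]; [contradiction|].
        destruct (P7f x y Hx Hy Hne) as [[l Hl] _].
        exists l; intros v; rewrite <- Hl; split; [|intros H; left; auto].
        intros [[_ [_ H]]|[[H _]|[H _]]]; [auto|contradiction|contradiction].
    + intros v [[Hxs [Hys Hc]]|[[-> [_ [_ ->]]]|[-> [_ [_ ->]]]]]; [|left; auto|left; auto].
      right. destruct Hx as [|Hx]; [contradiction|]. destruct Hy as [|Hy]; [contradiction|].
      eapply (proj1 (proj2 (P7f x y Hx Hy Hne))); eauto.
    + intros v. pose proof (Hsym v). tauto.
  - intros x y [Hc Hne] v. destruct Hc as [Hc|[-> [->|HU]]].
    + destruct (P2a _ _ Hc) as [Hx Hy].
      assert (x <> s) by (intro; subst; contradiction).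
      assert (y <> s) by (intro; subst; contradiction).
      pose proof (P7c x y (conj Hc Hne) v). tauto.
    + contradiction.
    + assert (y <> s) by auto. tauto.
  - intros x y Hx Hy Hnxy Hnyx.
    destruct (classic (x = s)) as [Ex|Nx].
    { subst x. split.
      - intros u Hu; split; [intros [H1 H2] | intros [v [Hv _]]]; exfalso.
        + destruct H1 as [H1|[-> _]]; [eapply NR; eauto|]. apply Hnxy; auto.
        + destruct Hv as [[H _]|[[_ [_ [HU _]]]|[Hys [H _]]]]; [contradiction| |contradiction].
          apply Hnxy; right; auto.
      - intros z z' _ _ _ _ _ v Hv; exfalso.
        destruct Hv as [[H _]|[[_ [_ [HU _]]]|[Hys [H _]]]]; [contradiction| |contradiction].
        apply Hnxy; right; auto. }
    destruct (classic (y = s)) as [Ey|Ny].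
    { subst y. split.
      - intros u Hu; split; [intros [H1 H2] | intros [v [Hv _]]]; exfalso.
        + destruct H2 as [H2|[-> _]]; [eapply NR; eauto|]. apply Hnyx; auto.
        + destruct Hv as [[_ [H _]]|[[H _]|[_ [_ [HU _]]]]]; [contradiction|contradiction|].
          apply Hnyx; right; auto.
      - intros z z' _ _ _ _ _ v Hv; exfalso.
        destruct Hv as [[_ [H _]]|[[H _]|[_ [_ [HU _]]]]]; [contradiction|contradiction|].
        apply Hnyx; right; auto. }
    destruct Hx as [|Hx]; [contradiction|]. destruct Hy as [|Hy]; [contradiction|].
    assert (Nxy : ~ cle p x y) by (intro; apply Hnxy; left; auto).
    assert (Nyx : ~ cle p y x) by (intro; apply Hnyx; left; auto).
    destruct (P7i x y Hx Hy Nxy Nyx) as [A B].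
    assert (Hxy : x <> y) by (intro E; subst; apply Nxy; auto).
    split.
    + intros u [->|Hu].
      * split.
        -- intros [[H1|[_ [H1|H1]]] [H2|[_ [H2|H2]]]];
             try (exfalso; eapply NL; eauto; fail); try contradiction.
           destruct (H7 x y H1 H2 Nxy Nyx) as [v [Hv HUv]].
           exists v; split; [left; auto | right; split; auto].
        -- intros [v [Hv Hcv]].
           destruct Hv as [[_ [_ Hv]]|[[H _]|[H _]]]; try contradiction.
           destruct Hcv as [Hcv|[_ [Hvs|HUv]]]; [exfalso; eapply NL; eauto| |].
           ++ subst v. exfalso. apply Hs. eapply (proj1 (proj2 (P7f x y Hx Hy Hxy))). eauto.
           ++ assert (Hv' : cX p v) by (eapply (proj1 (proj2 (P7f x y Hx Hy Hxy))); eauto).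
              destruct (proj2 (A v Hv') (ex_intro _ v (conj Hv (P2r v Hv')))) as [Hvx Hvy].
              split; right; split; auto; right; eapply HUup; eauto.
      * assert (Hus : u <> s) by (intro; subst; contradiction).
        split.
        -- intros [[H1|[E _]] [H2|[E' _]]]; try contradiction.
           destruct (proj1 (A u Hu) (conj H1 H2)) as [v [Hv Huv]].
           exists v; split; left; auto; repeat split; auto; intro; subst; eauto.
        -- intros [v [Hv Hcv]].
           destruct Hv as [[_ [_ Hv]]|[[H _]|[H _]]]; try contradiction.
           destruct Hcv as [Hcv|[E _]]; [|contradiction].
           destruct (proj2 (A u Hu) (ex_intro _ v (conj Hv Hcv))); split; left; auto.
    + intros z z' Hhx Hhy Hbx Hby Hzz v Hv.
      destruct Hv as [[_ [_ Hv]]|[[H _]|[H _]]]; try contradiction.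
      eapply B; eauto.
Qed.

Lemma add_below (p : cond O L) (t s : T O L) :
  InP ltO F p -> cX p t -> ~ cX p s -> lev_lt ltO (pi s) (pi t) ->
  (forall u, lev_succ O ltO u (pi t) -> u = pi s) ->
  (forall z, piB O L s = Bz L z -> cX p (TTop z)) ->
  (forall z n, s = TMid z n -> t = TTop z) ->
  exists p', InP ltO F p' /\ ext p' p /\ cX p' s /\
    (forall x, cX p' x -> x = s \/ cX p x) /\
    (forall x, cX p x -> (cle p' s x <-> cle p t x)).
Proof.
  intros Hp Ht Hs Hlev Hsucc H3 H4.
  pose proof Hp as Hp'.
  destruct Hp' as (P1 & P2a & P2r & P2as & P2t & P2l & P3 & P4 & P5 & P6 & P7f & P7c & P7i).
  destruct (add_point p s (fun x => cle p t x)) as [HP HE]; auto.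
  - intros x H; apply P2a in H; tauto.
  - intros x y; eauto.
  - intros x H. destruct (classic (t = x)) as [<-|Ne]; auto.
    eapply lev_trans; [exact Hlev|apply P2l; split; auto].
  - intros z n E. rewrite (H4 z n E). split; [apply P2r; rewrite <- (H4 z n E); auto|].
    intros xi Hxi H. apply (lev_irr (@LW1p O)).
    change (lev_lt ltO (pi (TTop z : T O L)) (pi (TTop xi : T O L))).
    apply P2l; split; [exact H| congruence].
  - intros x u Hx Hu. destruct (classic (t = x)) as [<-|Ne]; [left; auto|].
    destruct (P2a _ _ Hx) as [_ Hxx].
    destruct (P6 t x u Hxx Hu (conj Hx Ne)) as [v [_ [Hpv [Htv Hvx]]]].
    right; exists v; auto.
  - intros x y Hx Hy Nxy Nyx.
    destruct (P2a _ _ Hx) as [_ Hxx]. destruct (P2a _ _ Hy) as [_ Hyy].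
    destruct (P7i x y Hxx Hyy Nxy Nyx) as [A _].
    destruct (proj1 (A t Ht) (conj Hx Hy)) as [v [Hv Htv]]. eauto.
  - exists (addc p s (fun x => cle p t x)). split; [auto|split; [auto|split; [|split]]].
    + simpl; auto.
    + simpl; auto.
    + intros x Hx; simpl. assert (Hxs : x <> s) by (intro; subst; contradiction).
      split; [intros [K|[_ [K|K]]]; [apply P2a in K; tauto|contradiction|auto]|].
      intros K; right; auto.
Qed.

Lemma add_iso (p : cond O L) (s : T O L) :
  InP ltO F p -> ~ cX p s -> (forall z n, s <> TMid z n) ->
  exists p', InP ltO F p' /\ ext p' p /\ cX p' s /\
    (forall x, cX p' x -> x = s \/ cX p x).
Proof.
  intros Hp Hs Hm.
  destruct (add_point p s (fun _ => False)) as [HP HE]; auto; try tauto.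
  - intros z Hz. destruct s as [a k|z' k|z']; simpl in Hz; try discriminate.
    + exfalso; eapply Hm; eauto.
    + left; congruence.
  - intros z n E; exfalso; eapply Hm; eauto.
  - exists (addc p s (fun _ => False)); simpl; auto.
Qed.

Definition code (x : T O L) : nat :=
  match x with TLow _ k => k | TMid _ k => k | TTop _ => 0 end.

Lemma fresh (l : list (T O L)) (n : nat) :
  exists k, n < k /\ (forall a, ~ In (TLow a k) l) /\ (forall z, ~ In (TMid z k) l).
Proof.
  set (M := fold_right (fun x acc => code x + acc) 0 l).
  assert (HM : forall x, In x l -> code x <= M).
  { unfold M; clear M; induction l as [|y l IH]; simpl; [tauto|].
    intros x [->|H]; [lia|]. specialize (IH x H); lia. }
  exists (S (n + M)); split; [lia|split].
  - intros a H; apply HM in H; simpl in H; lia.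
  - intros z H; apply HM in H; simpl in H; lia.
Qed.

Lemma fresh_p (p : cond O L) (n : nat) : InP ltO F p ->
  exists k, n < k /\ (forall a, ~ cX p (TLow a k)) /\ (forall z, ~ cX p (TMid z k)).
Proof.
  intros Hp. destruct Hp as [[l Hl] _].
  destruct (fresh l n) as [k [H1 [H2 H3]]].
  exists k; split; [auto|split; intros; rewrite Hl; auto].
Qed.

Lemma partA : forall p t, InP ltO F p -> ~ cX p t ->
  exists p', InP ltO F p' /\ ext p' p /\ cX p' t.
Proof.
  intros p t Hp Ht.
  destruct t as [a k|z k|z].
  - destruct (add_iso p (TLow a k)) as [p' [H1 [H2 [H3 _]]]]; eauto; discriminate.
  - destruct (classic (cX p (TTop z))) as [Hz|Hz].
    + destruct (add_below p (TTop z) (TMid z k)) as [p' [H1 [H2 [H3 _]]]]; auto.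
      * simpl; auto.
      * intros u Hu; destruct u; simpl in Hu; tauto.
      * intros z' E; simpl in E; congruence.
      * intros z' n E; congruence.
      * eauto.
    + destruct (add_iso p (TTop z)) as [p1 [H1 [H2 [H3 H4]]]]; auto; [discriminate|].
      destruct (add_below p1 (TTop z) (TMid z k)) as [p' [H1' [H2' [H3' _]]]]; auto.
      * intros H; destruct (H4 _ H) as [E|E]; [discriminate|contradiction].
      * simpl; auto.
      * intros u Hu; destruct u; simpl in Hu; tauto.
      * intros z' E; simpl in E; congruence.
      * intros z' n E; congruence.
      * exists p'; split; [auto|split; [eapply ext_trans; eauto|auto]].
  - destruct (add_iso p (TTop z)) as [p' [H1 [H2 [H3 _]]]]; eauto; discriminate.
Qed.

Lemma partB : forall w (p : cond O L) (t : T O L) (a : O) (n : nat),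
  pi t = w -> InP ltO F p -> cX p t -> lev_lt ltO (LO a) w ->
  exists (p' : cond O L) (m : nat), InP ltO F p' /\ ext p' p /\ n < m /\
    cX p' (TLow a m) /\ ~ cX p (TLow a m) /\
    (forall x, cX p x -> (cle p' (TLow a m) x <-> cle p t x)).
Proof.
  intro w; induction w as [w IH] using (well_founded_induction lev_wf).
  intros p t a n Hw Hp Ht Ha.
  destruct (classic (exists u, lev_succ O ltO u w /\ u <> LO a)) as [[u [Hu Hua]]|Hno].
  - assert (Hau : lev_lt ltO (LO a) u).
    { destruct (succ_below _ _ _ Hu Ha) as [E|E]; [congruence|auto]. }
    assert (Hchain : forall s', pi s' = u -> ~ cX p s' ->
      (forall z, piB O L s' = Bz L z -> cX p (TTop z)) ->
      (forall z n, s' = TMid z n -> t = TTop z) ->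
      exists (p' : cond O L) (m : nat), InP ltO F p' /\ ext p' p /\ n < m /\
        cX p' (TLow a m) /\ ~ cX p (TLow a m) /\
        (forall x, cX p x -> (cle p' (TLow a m) x <-> cle p t x))).
    { intros s' Hps Hns H3 H4.
      destruct (add_below p t s') as [p1 [Hp1 [He1 [Hs1 [_ Hc1]]]]]; auto.
      - rewrite Hps, Hw; apply succ_lt; auto.
      - intros u' Hu'. rewrite Hps. rewrite Hw in Hu'. eapply succ_uniq; eauto.
      - destruct (IH u (succ_lt _ _ Hu) p1 s' a n Hps Hp1 Hs1 Hau)
          as [p2 [m [Hp2 [He2 [Hnm [Hs2 [Hns2 Hc2]]]]]]].
        exists p2, m; split; [auto|split; [eapply ext_trans; eauto|split; [auto|split; [auto|split]]]].
        + intro H; apply Hns2; apply He1; auto.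
        + intros x Hx. rewrite Hc2 by (apply He1; auto). apply Hc1; auto. }
    destruct u as [b| |].
    + destruct (fresh_p p 0 Hp) as [k [_ [Hk _]]].
      apply (Hchain (TLow b k)); auto; intros; discriminate.
    + destruct w as [c| |]; simpl in Hu; try tauto.
      destruct t as [a0 k0|z k0|z]; simpl in Hw; try discriminate.
      destruct (fresh_p p 0 Hp) as [k [_ [_ Hk]]].
      apply (Hchain (TMid z k)); auto.
      * intros z' E; simpl in E; congruence.
      * intros z' n' E; congruence.
    + destruct w; simpl in Hu; tauto.
  - destruct (fresh_p p n Hp) as [k [Hnk [Hk _]]].
    destruct (add_below p t (TLow a k)) as [p1 [Hp1 [He1 [Hs1 [_ Hc1]]]]]; auto.
    + rewrite Hw; auto.
    + intros u Hu. rewrite Hw in Hu. apply NNPP; intro Ne. apply Hno; eauto.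
    + intros z E; discriminate.
    + intros z n' E; discriminate.
    + exists p1, k; split; [auto|split; [auto|split; [auto|split; [auto|split; [auto|]]]]]. intros x Hx; apply Hc1; auto.
Qed.

End S.

Theorem lemma3p8 (O : Type) (ltO : O -> O -> Prop) (L : Type)
  (F : L -> L -> O)
  (HO : is_omega1 ltO)
  (HL : ~ card_le_aleph 2 L)
  (HF : forall z z', F z z' = F z' z) :
  (forall p : cond O L, InP ltO F p ->
     forall t : T O L, ~ cX p t ->
       exists p' : cond O L, InP ltO F p' /\ ext p' p /\ cX p' t) /\
  (forall (p : cond O L) (t : T O L) (a : O) (n : nat),
     InP ltO F p -> cX p t -> lev_lt ltO (LO a) (pi t) ->
     exists (p' : cond O L) (m : nat),
       InP ltO F p' /\ ext p' p /\ n < m /\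
       cX p' (TLow a m) /\ ~ cX p (TLow a m) /\
       (forall x, cX p x -> (cle p' (TLow a m) x <-> cle p t x))).
Proof.
  destruct HO as [[irr [tr [tri wf]]] _].
  split.
  - intros p Hp t Ht. eapply partA; eauto.
  - intros p t a n Hp Ht Ha. eapply partB; eauto.
Qed.
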